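(* Let $X,A^0,\dots,A^{d-1}\in\mathcal{M}_D(\mathbb{C})$ and for $N\ge1$ let $|\psi_N(X,A)\rangle=\sum_{i_1,\dots,i_N=0}^{d-1}\mathrm{Tr}[XA^{i_1}A^{i_2}\cdots A^{i_N}]\,|i_1i_2\cdots i_N\rangle$. Then $|\psi_N(X,A)\rangle$ is translationally invariant for every $N\ge1$ if and only if $$\mathrm{Tr}\big[X[a,b]\big]=0\quad\text{for all }a,b\in\mathrm{Alg}(\{A^i\}).$$
   Context: A state $|\psi\rangle\in(\mathbb{C}^d)^{\otimes N}$ is translationally invariant if $T|\psi\rangle=|\psi\rangle$, where $T|i_1i_2\cdots i_N\rangle=|i_2\cdots i_Ni_1\rangle$ is the cyclic shift. $[a,b]=ab-ba$. $\mathrm{Alg}(\{A^i\})$ is the linear span of all finite products $A^{i_1}\cdots A^{i_k}$ with $k\ge1$. *)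

(* Defs.v *)
From HB Require Import structures.
From mathcomp Require Import all_boot all_order all_algebra.
Set Implicit Arguments. Unset Strict Implicit. Unset Printing Implicit Defensive.
Import GRing.Theory.
Local Open Scope ring_scope.

Definition mxprod (C : fieldType) (D : nat) (s : seq 'M[C]_D) : 'M[C]_D :=
  foldr (@mulmx C D D D) 1%:M s.

(* A vector of (C^d)^{\otimes N}, given by its coefficients in the
   computational basis |i_1 ... i_N>, indexed by N-tuples of 'I_d. *)
Definition state (C : fieldType) (d N : nat) := N.-tuple 'I_d -> C.

(* Cyclic shift T |i1 i2 ... iN> = |i2 ... iN i1>, extended linearly:
   the coefficient of T psi at basis vector j is the coefficient of psi at
   the basis vector t with rot 1 t = j, i.e. t = rotr 1 j. *)
Definition shiftT (C : fieldType) (d N : nat) (psi : state C d N) : state C d N :=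
  fun j => psi [tuple of rotr 1 j].

Definition transl_inv (C : fieldType) (d N : nat) (psi : state C d N) : Prop :=
  forall j, shiftT psi j = psi j.

Definition psiN (C : fieldType) (d D N : nat) (X : 'M[C]_D)
  (A : 'I_d -> 'M[C]_D) : state C d N :=
  fun i => \tr (X *m mxprod (map A (tval i))).

Definition inAlg (C : fieldType) (d D : nat) (A : 'I_d -> 'M[C]_D)
  (a : 'M[C]_D) : Prop :=
  exists s : seq (C * seq 'I_d),
    all (fun p => 0 < size p.2)%N s /\
    a = \sum_(p <- s) p.1 *: mxprod (map A p.2).

(* Main.v *)
Require Import Defs.
From HB Require Import structures.
From mathcomp Require Import all_boot all_order all_algebra.
Import GRing.Theory.
Local Open Scope ring_scope.

Lemma mxprod_cat (C : fieldType) (D : nat) (s1 s2 : seq 'M[C]_D) :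
  mxprod (s1 ++ s2) = mxprod s1 *m mxprod s2.
Proof.
elim: s1 => [|x s IH] /=; first by rewrite mul1mx.
by rewrite /mxprod /= -/(mxprod _) IH mulmxA.
Qed.

Lemma span_l (C : fieldType) (D : nat) (X b : 'M[C]_D) (I : Type)
  (c : I -> C) (g : I -> 'M[C]_D) (s : seq I) :
  (forall p, \tr (X *m (g p *m b)) = \tr (X *m (b *m g p))) ->
  \tr (X *m ((\sum_(p <- s) c p *: g p) *m b)) =
  \tr (X *m (b *m (\sum_(p <- s) c p *: g p))).
Proof.
move=> H; elim: s => [|p s IH].
  by rewrite !big_nil mul0mx !mulmx0.
rewrite big_cons mulmxDl mulmxDr !mulmxDr !mxtraceD IH.
congr (_ + _).
by rewrite -scalemxAl -!scalemxAr !mxtraceZ H.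
Qed.

Theorem lemma3 (C : numClosedFieldType) (d D : nat) (X : 'M[C]_D)
  (A : 'I_d -> 'M[C]_D) :
  (forall N : nat, (1 <= N)%N -> transl_inv (@psiN C d D N X A)) <->
  (forall a b : 'M[C]_D, inAlg A a -> inAlg A b ->
     \tr (X *m (a *m b - b *m a)) = 0).
Proof.
set f := fun s : seq 'I_d => \tr (X *m mxprod (map A s)).
split.
- move=> H.
  have Hr : forall s, f (rotr 1 s) = f s.
    move=> s; case: s => [|x s] //.
    have := H (size (x :: s)) isT (in_tuple (x :: s)).
    by rewrite /shiftT /psiN.
  have Hrot : forall s, f (rot 1 s) = f s.
    by move=> s; rewrite -{2}(rotK 1 s) Hr.
  have Hc : forall w1 w2, f (w1 ++ w2) = f (w2 ++ w1).
    elim=> [|x w1 IH] w2; first by rewrite cats0.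
    transitivity (f (rot 1 (x :: w1 ++ w2))); first by rewrite Hrot.
    by rewrite rot1_cons rcons_cat IH cat_rcons.
  have Hw : forall w1 w2, \tr (X *m (mxprod (map A w1) *m mxprod (map A w2)))
      = \tr (X *m (mxprod (map A w2) *m mxprod (map A w1))).
    by move=> w1 w2; rewrite -!mxprod_cat -!map_cat; apply: Hc.
  move=> a b [sa [_ ->]] [sb [_ ->]].
  rewrite mulmxBr mxtraceD raddfN /=; apply/eqP; rewrite subr_eq0; apply/eqP.
  apply: span_l => p; apply/esym; apply: span_l => q; exact: Hw.
- move=> H N _ j; rewrite /shiftT /psiN /=.
  case: j => /= s _.
  case/lastP: s => [|s x] //.
  rewrite rotr1_rcons map_rcons -cats1 mxprod_cat.
  have -> : mxprod [:: A x] = A x by rewrite /mxprod /= mulmx1.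
  have -> : mxprod (A x :: map A s) = A x *m mxprod (map A s) by [].
  case: s => [|y s]; first by rewrite /mxprod /= mulmx1 mul1mx.
  have Ha : inAlg A (A x).
    exists [:: (1, [:: x])]; split => //.
    by rewrite big_seq1 scale1r /mxprod /= mulmx1.
  have Hb : inAlg A (mxprod (map A (y :: s))).
    exists [:: (1, y :: s)]; split => //.
    by rewrite big_seq1 scale1r.
  have := H _ _ Ha Hb; rewrite mulmxBr mxtraceD raddfN /= => /eqP.
  by rewrite subr_eq0 => /eqP.
Qed.
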